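(* Let $f,g,h$ be smooth real functions of one variable satisfying $f\neq 0$, $g\neq 0$, $g'\neq 0$ (where $'$ denotes $d/du$), and consider the generalized Kudryashov–Sinelshchikov equation $$\mathfrak{F}:=u_t-f(u)u_x-g(u)u_{xx}+h(u)u_x^2=0$$ for $u=u(t,x)$. Then this equation is nonlinearly self-adjoint. Moreover, writing $E(u):=\exp\left(-\int \frac{g'(u)+h(u)}{g(u)}\,du\right)$: (i) If $f(u)=a\,g(u)+b$ with constants $a,b$, and $f$ itself is not a constant, then the substitution is given by $$\phi(t,x,u)=\big(c_1\exp(ax+abt)+c_2\big)E(u).$$ (ii) If $f(u)=b$ is a constant, then the substitution is given by $$\phi(t,x,u)=\big(c_3(x+bt)+c_4\big)E(u).$$ (iii) In all remaining cases, the substitution is $\phi(u)=c_5\,E(u)$. Here $c_1,\dots,c_5$ are constants with $(c_1,c_2)\neq(0,0)$, $(c_3,c_4)\neq(0,0)$, $c_5\neq 0$.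
   Context: For a differential equation $\mathfrak{F}[u]=0$ in independent variables $t,x$ and dependent variable $u$, introduce a new dependent variable $\nu=\nu(t,x)$ (the adjoint variable). The formal Lagrangian is $\mathfrak{L}=\nu\mathfrak{F}$, and the adjoint differential function is $\mathfrak{F}^*=\frac{\delta\mathfrak{L}}{\delta u}$, where for a second-order $\mathfrak{F}$ the Euler operator is $\frac{\delta}{\delta u}=\frac{\partial}{\partial u}-D_t\frac{\partial}{\partial u_t}-D_x\frac{\partial}{\partial u_x}+D_x^2\frac{\partial}{\partial u_{xx}}$ (plus the corresponding mixed/other second-derivative terms if present), with $D_t,D_x$ the total derivative operators. The equation $\mathfrak{F}=0$ is called nonlinearly self-adjoint if there is a substitution $\nu=\phi(t,x,u)\neq 0$ (with derivatives of $\nu$ replaced by the corresponding total derivatives of $\phi$) such that $\mathfrak{F}^*|_{\nu=\phi(t,x,u)}=\lambda\mathfrak{F}$ for some coefficient $\lambda=\lambda(t,x,u,\dots)$. If $\phi$ depends only on $u$, the equation is called quasi self-adjoint; if $\phi=u$ works, it is called strictly self-adjoint. The antiderivative in $E(u)$ is any fixed antiderivative. *)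

(* Defs.v *)
From Stdlib Require Import Reals List.
From Coquelicot Require Import Coquelicot.
Open Scope R_scope.

Definition smooth1 (f : R -> R) : Prop :=
  forall (n : nat) (x : R), ex_derive (Derive_n f n) x.

Definition pd2 (i : nat) (u : R -> R -> R) : R -> R -> R :=
  match i with
  | O => fun t x => Derive (fun s => u s x) t
  | _ => fun t x => Derive (fun y => u t y) x
  end.

Fixpoint iterD2 (l : list nat) (u : R -> R -> R) : R -> R -> R :=
  match l with
  | nil => u
  | i :: l' => pd2 i (iterD2 l' u)
  end.

Definition smooth2 (u : R -> R -> R) : Prop :=
  forall l : list nat,
    (forall t x, ex_derive (fun s => iterD2 l u s x) t
                 /\ ex_derive (fun y => iterD2 l u t y) x)
    /\ (forall t x, continuous (fun p : R * R => iterD2 l u (fst p) (snd p)) (t, x)).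

Definition pd3 (i : nat) (φ : R -> R -> R -> R) : R -> R -> R -> R :=
  match i with
  | O => fun t x w => Derive (fun s => φ s x w) t
  | 1%nat => fun t x w => Derive (fun y => φ t y w) x
  | _ => fun t x w => Derive (fun z => φ t x z) w
  end.

Fixpoint iterD3 (l : list nat) (φ : R -> R -> R -> R) : R -> R -> R -> R :=
  match l with
  | nil => φ
  | i :: l' => pd3 i (iterD3 l' φ)
  end.

Definition smooth3 (φ : R -> R -> R -> R) : Prop :=
  forall l : list nat,
    (forall t x w, ex_derive (fun s => iterD3 l φ s x w) t
                   /\ ex_derive (fun y => iterD3 l φ t y w) x
                   /\ ex_derive (fun z => iterD3 l φ t x z) w)
    /\ (forall t x w,
          continuous (fun p : R * R * R => iterD3 l φ (fst (fst p)) (snd (fst p)) (snd p))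
                     (t, x, w)).

Definition KS (f g h : R -> R) (t x u ut ux uxx : R) : R :=
  ut - f u * ux - g u * uxx + h u * ux ^ 2.

Definition formal_lagrangian (f g h : R -> R) (t x u ut ux uxx nu : R) : R :=
  nu * KS f g h t x u ut ux uxx.

Definition jet_ut (u : R -> R -> R) (t x : R) : R := Derive (fun s => u s x) t.
Definition jet_ux (u : R -> R -> R) (t x : R) : R := Derive (fun y => u t y) x.
Definition jet_uxx (u : R -> R -> R) (t x : R) : R := Derive (fun y => jet_ux u t y) x.

(* Euler operator  d/du = ∂/∂u - D_t ∂/∂u_t - D_x ∂/∂u_x + D_x^2 ∂/∂u_xx
   applied to a Lagrangian L(t,x,u,u_t,u_x,u_xx,nu), evaluated along actual
   functions u(t,x), nu(t,x); total derivatives D_t, D_x become partial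
   derivatives of the composed functions of (t,x). *)
Definition euler_op (L : R -> R -> R -> R -> R -> R -> R -> R)
    (u nu : R -> R -> R) (t x : R) : R :=
  let J := fun (k : R -> R -> R -> R -> R -> R -> R -> R) (t x : R) =>
             k t x (u t x) (jet_ut u t x) (jet_ux u t x) (jet_uxx u t x) (nu t x) in
  let dLu   := J (fun t x w a b c n => Derive (fun z => L t x z a b c n) w) in
  let dLut  := J (fun t x w a b c n => Derive (fun z => L t x w z b c n) a) in
  let dLux  := J (fun t x w a b c n => Derive (fun z => L t x w a z c n) b) in
  let dLuxx := J (fun t x w a b c n => Derive (fun z => L t x w a b z n) c) in
  dLu t x
  - Derive (fun s => dLut s x) t
  - Derive (fun y => dLux t y) x
  + Derive (fun y => Derive (fun z => dLuxx t z) y) x.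

Definition adjoint_KS (f g h : R -> R) (u nu : R -> R -> R) (t x : R) : R :=
  euler_op (formal_lagrangian f g h) u nu t x.

(* phi is an admissible substitution nu = phi(t,x,u) making the equation
   nonlinearly self-adjoint: phi is smooth, not identically zero, and
   F^*|_{nu = phi(t,x,u)} = lambda F for some coefficient lambda depending on
   the jet (t,x,u,u_t,u_x,u_xx); the identity is required along every smooth u. *)
Definition nsa_substitution (f g h : R -> R) (φ : R -> R -> R -> R) : Prop :=
  smooth3 φ /\
  (exists t x w, φ t x w <> 0) /\
  exists λ : R -> R -> R -> R -> R -> R -> R,
    forall u : R -> R -> R, smooth2 u ->
    forall t x : R,
      adjoint_KS f g h u (fun t x => φ t x (u t x)) t x
      = λ t x (u t x) (jet_ut u t x) (jet_ux u t x) (jet_uxx u t x)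
        * KS f g h t x (u t x) (jet_ut u t x) (jet_ux u t x) (jet_uxx u t x).

Definition nonlinearly_self_adjoint (f g h : R -> R) : Prop :=
  exists φ, nsa_substitution f g h φ.

(* Main.v *)
Require Import Defs.
From Stdlib Require Import Reals Lra Lia List Classical FunctionalExtensionality Setoid Morphisms.
From Coquelicot Require Import Coquelicot.
Open Scope R_scope.

Lemma isd_ext (f g : R -> R) (x l : R) : (forall y, f y = g y) -> is_derive f x l -> is_derive g x l.
Proof. intros H H1. eapply is_derive_ext; eauto. Qed.
Lemma isd_val (f : R -> R) (x l l' : R) : is_derive f x l -> l = l' -> is_derive f x l'.
Proof. intros H ->; auto. Qed.
Lemma isd_const (c x : R) : is_derive (fun _ => c) x 0.
Proof. apply (is_derive_const c x). Qed.
Lemma isd_id (x : R) : is_derive (fun y => y) x 1.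
Proof. apply (is_derive_id x). Qed.
Lemma isd_plus (f g : R -> R) (x df dg : R) : is_derive f x df -> is_derive g x dg ->
  is_derive (fun y => f y + g y) x (df + dg).
Proof. intros; apply (is_derive_plus f g); auto. Qed.
Lemma isd_minus (f g : R -> R) (x df dg : R) : is_derive f x df -> is_derive g x dg ->
  is_derive (fun y => f y - g y) x (df - dg).
Proof. intros; apply (is_derive_minus f g); auto. Qed.
Lemma isd_opp (f : R -> R) (x df : R) : is_derive f x df ->
  is_derive (fun y => - f y) x (- df).
Proof. intros; apply (is_derive_opp f); auto. Qed.
Lemma isd_mult (f g : R -> R) (x df dg : R) : is_derive f x df -> is_derive g x dg ->
  is_derive (fun y => f y * g y) x (df * g x + f x * dg).
Proof. intros; apply (is_derive_mult f g); auto. intros; apply Rmult_comm. Qed.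
Lemma isd_comp (f g : R -> R) (x df dg : R) : is_derive f (g x) df -> is_derive g x dg ->
  is_derive (fun y => f (g y)) x (df * dg).
Proof. intros. eapply isd_val. apply (is_derive_comp f g); eauto.
  simpl. unfold scal; simpl; unfold mult; simpl. ring. Qed.
Lemma isd_exp (x : R) : is_derive exp x (exp x).
Proof. apply is_derive_Reals. apply derivable_pt_lim_exp. Qed.
Lemma isd_Derive (f : R -> R) (x : R) : ex_derive f x -> is_derive f x (Derive f x).
Proof. intros H; apply Derive_correct; auto. Qed.
Lemma Derive_isd (f : R -> R) (x l : R) : is_derive f x l -> Derive f x = l.
Proof. apply is_derive_unique. Qed.
Lemma isd_ex (f : R -> R) (x l : R) : is_derive f x l -> ex_derive f x.
Proof. intros H; exists l; auto. Qed.

Lemma const_of_deriv0 (F : R -> R) : (forall x, is_derive F x 0) -> forall x y, F x = F y.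
Proof.
  intros H x y. destruct (Rtotal_order x y) as [Hl|[He|Hg]].
  - apply (eq_is_derive F x y); auto.
  - subst; auto.
  - symmetry. apply (eq_is_derive F y x); auto.
Qed.
Fixpoint Ck (n : nat) (f : R -> R) : Prop :=
  (forall x, ex_derive f x) /\
  match n with O => True | S m => Ck m (Derive f) end.

Lemma Derive_n_S (f : R -> R) n : Derive_n f (S n) = Derive_n (Derive f) n.
Proof.
  apply functional_extensionality; intro x.
  replace (S n) with (n + 1)%nat by lia.
  rewrite <- (Derive_n_comp f n 1). reflexivity.
Qed.

Lemma smooth1_Ck (f : R -> R) : smooth1 f -> forall n, Ck n f.
Proof.
  intros H n; revert f H; induction n; intros f H; simpl; split; auto.
  - apply (H 0%nat).
  - apply (H 0%nat).
  - apply IHn. intros k x. rewrite <- Derive_n_S. apply H.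
Qed.

Lemma Ck_smooth1 (f : R -> R) : (forall n, Ck n f) -> smooth1 f.
Proof.
  intros H n; revert f H; induction n; intros f H x.
  - apply (H 0%nat).
  - rewrite Derive_n_S. apply IHn. intros k. apply (H (S k)).
Qed.

Lemma Ck_ex n f : Ck n f -> forall x, ex_derive f x.
Proof. destruct n; simpl; tauto. Qed.

Lemma Ck_mono n f : Ck (S n) f -> Ck n f.
Proof.
  revert f; induction n; intros f H; simpl in *; split; try tauto.
  apply IHn. tauto.
Qed.

Lemma Ck_D n f : Ck (S n) f -> Ck n (Derive f).
Proof. simpl; tauto. Qed.

Lemma Derive_fun_eq (f : R -> R) (df : R -> R) : (forall x, is_derive f x (df x)) -> Derive f = df.
Proof. intros H; apply functional_extensionality; intro; apply Derive_isd; auto. Qed.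

Lemma Ck_ext n f g : (forall x, f x = g x) -> Ck n f -> Ck n g.
Proof. intros H. replace g with f; auto. apply functional_extensionality; auto. Qed.

Lemma Ck_const n : forall c, Ck n (fun _ => c).
Proof.
  induction n; intros c; simpl; split; auto; try (intros; eexists; apply isd_const).
  rewrite (Derive_fun_eq _ (fun _ => 0)). apply IHn. intros; apply isd_const.
Qed.

Lemma Ck_plus n : forall f g, Ck n f -> Ck n g -> Ck n (fun x => f x + g x).
Proof.
  induction n; intros f g Hf Hg; split.
  - intros x; eexists; apply isd_plus; apply isd_Derive; eapply Ck_ex; eauto.
  - exact I.
  - intros x; eexists; apply isd_plus; apply isd_Derive; eapply Ck_ex; eauto.
  - rewrite (Derive_fun_eq _ (fun x => Derive f x + Derive g x)).
    apply IHn; apply Ck_D; auto.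
    intros x; apply isd_plus; apply isd_Derive; eapply Ck_ex; eauto.
Qed.

Lemma Ck_mult n : forall f g, Ck n f -> Ck n g -> Ck n (fun x => f x * g x).
Proof.
  induction n; intros f g Hf Hg; split.
  - intros x; eexists; apply isd_mult; apply isd_Derive; eapply Ck_ex; eauto.
  - exact I.
  - intros x; eexists; apply isd_mult; apply isd_Derive; eapply Ck_ex; eauto.
  - rewrite (Derive_fun_eq _ (fun x => Derive f x * g x + f x * Derive g x)).
    apply Ck_plus; apply IHn; auto using Ck_D, Ck_mono.
    intros x; apply isd_mult; apply isd_Derive; eapply Ck_ex; eauto.
Qed.

Lemma Ck_exp n : forall f, Ck n f -> Ck n (fun x => exp (f x)).
Proof.
  induction n; intros f Hf; split.
  - intros x; eexists; apply (isd_comp exp f); [apply isd_exp | apply isd_Derive; eapply Ck_ex; eauto].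
  - exact I.
  - intros x; eexists; apply (isd_comp exp f); [apply isd_exp | apply isd_Derive; eapply Ck_ex; eauto].
  - rewrite (Derive_fun_eq _ (fun x => exp (f x) * Derive f x)).
    apply Ck_mult; auto using Ck_D, Ck_mono.
    intros x; apply (isd_comp exp f); [apply isd_exp | apply isd_Derive; eapply Ck_ex; eauto].
Qed.

Lemma isd_inv (f : R -> R) (x df : R) : f x <> 0 -> is_derive f x df ->
  is_derive (fun y => / f y) x (- df / (f x)^2).
Proof. intros; apply is_derive_inv; auto. Qed.

Lemma Ck_inv n : forall f, (forall x, f x <> 0) -> Ck n f -> Ck n (fun x => / f x).
Proof.
  induction n; intros f Hn Hf; split.
  - intros x; eexists; apply isd_inv; auto; apply isd_Derive; eapply Ck_ex; eauto.
  - exact I.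
  - intros x; eexists; apply isd_inv; auto; apply isd_Derive; eapply Ck_ex; eauto.
  - rewrite (Derive_fun_eq _ (fun x => (-1) * Derive f x * (/ f x * / f x))).
    apply Ck_mult; [apply Ck_mult|apply Ck_mult]; auto using Ck_D, Ck_mono, Ck_const.
    intros x; eapply isd_val. apply isd_inv; auto; apply isd_Derive; eapply Ck_ex; eauto.
    field; auto.
Qed.

Lemma P_Ck (g h P : R -> R) (Hg : smooth1 g) (Hh : smooth1 h) (Hg0 : forall w, g w <> 0)
  (HP : forall w, is_derive P w ((Derive g w + h w) / g w)) : forall n, Ck n P.
Proof.
  intros n. destruct n as [|n]. { split; auto. intros x; eexists; apply HP. }
  split. { intros x; eexists; apply HP. }
  rewrite (Derive_fun_eq _ _ HP).
  apply (Ck_ext n (fun w => (Derive g w + h w) * / g w)). { intros; reflexivity. }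
  apply Ck_mult. apply Ck_plus. apply Ck_D, smooth1_Ck; auto. apply smooth1_Ck; auto.
  apply Ck_inv; auto. apply smooth1_Ck; auto.
Qed.

Lemma E_smooth (g h P : R -> R) (Hg : smooth1 g) (Hh : smooth1 h) (Hg0 : forall w, g w <> 0)
  (HP : forall w, is_derive P w ((Derive g w + h w) / g w)) : smooth1 (fun w => exp (- P w)).
Proof.
  apply Ck_smooth1; intros n. apply Ck_exp.
  apply (Ck_ext n (fun w => (-1) * P w)). { intros; ring. }
  apply Ck_mult. apply Ck_const. apply (P_Ck g h); auto.
Qed.

Lemma E_deriv (g h P : R -> R) 
  (HP : forall w, is_derive P w ((Derive g w + h w) / g w)) w :
  is_derive (fun w => exp (- P w)) w (- exp (- P w) * ((Derive g w + h w) / g w)).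
Proof.
  eapply isd_val. apply (isd_comp exp (fun w => - P w)). apply isd_exp. apply isd_opp, HP.
  ring.
Qed.

Instance Derive_proper : Proper (pointwise_relation R eq ==> eq ==> eq) Derive.
Proof. intros f1 f2 H x1 x2 ->. apply Derive_ext. exact H. Qed.

Lemma H_ut (N A B C y : R) : Derive (fun z => N * (z - A - B + C)) y = N.
Proof. apply Derive_isd. eapply isd_val.
  apply (isd_mult (fun _ => N) (fun z => z - A - B + C)). apply isd_const.
  apply isd_plus. apply isd_minus. apply isd_minus. apply isd_id. apply isd_const. apply isd_const. apply isd_const.
  ring. Qed.
Lemma H_ux (N a F B H y : R) : Derive (fun z => N * (a - F * z - B + H * z^2)) y = N * (-F + 2*H*y).
Proof. apply Derive_isd. eapply isd_val.
  apply (isd_mult (fun _ => N)). apply isd_const.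
  apply isd_plus. apply isd_minus. apply isd_minus. apply isd_const.
  apply (isd_mult (fun _ => F)). apply isd_const. apply isd_id. apply isd_const.
  apply (isd_mult (fun _ => H)). apply isd_const.
  apply (isd_ext (fun z => z * z)). intros; ring.
  apply isd_mult; apply isd_id.
  simpl; ring. Qed.
Lemma H_uxx (N a A G C y : R) : Derive (fun z => N * (a - A - G * z + C)) y = -(N*G).
Proof. apply Derive_isd. eapply isd_val.
  apply (isd_mult (fun _ => N)). apply isd_const.
  apply isd_plus. apply isd_minus. apply isd_minus. apply isd_const. apply isd_const.
  apply (isd_mult (fun _ => G)). apply isd_const. apply isd_id. apply isd_const.
  ring. Qed.
Lemma H_u (f g h : R -> R) (N a b c w : R) : ex_derive f w -> ex_derive g w -> ex_derive h w ->
  Derive (fun z => N * (a - f z * b - g z * c + h z * b^2)) w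
  = N * (- Derive f w * b - Derive g w * c + Derive h w * b^2).
Proof. intros Hf Hg Hh. apply Derive_isd. eapply isd_val.
  apply (isd_mult (fun _ => N)). apply isd_const.
  apply isd_plus. apply isd_minus. apply isd_minus. apply isd_const.
  apply (isd_mult f (fun _ => b)). apply isd_Derive; auto. apply isd_const.
  apply (isd_mult g (fun _ => c)). apply isd_Derive; auto. apply isd_const.
  apply (isd_mult h (fun _ => b^2)). apply isd_Derive; auto. apply isd_const.
  ring. Qed.

Lemma adjoint_reduce (f g h : R -> R) u nu t x :
  (forall w, ex_derive f w) -> (forall w, ex_derive g w) -> (forall w, ex_derive h w) ->
  adjoint_KS f g h u nu t x =
  nu t x * (- Derive f (u t x) * jet_ux u t x - Derive g (u t x) * jet_uxx u t x
            + Derive h (u t x) * (jet_ux u t x)^2)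
  - Derive (fun s => nu s x) t
  - Derive (fun y => nu t y * (- f (u t y) + 2 * h (u t y) * jet_ux u t y)) x
  + Derive (fun y => Derive (fun z => -(nu t z * g (u t z))) y) x.
Proof.
  intros Hf Hg Hh.
  unfold adjoint_KS, euler_op, formal_lagrangian, KS. cbv beta zeta.
  setoid_rewrite H_ut. setoid_rewrite H_ux. setoid_rewrite H_uxx.
  rewrite H_u; auto.
Qed.

Lemma isd_Fcomp (F v : R -> R) (x dv : R) : (forall w, ex_derive F w) -> is_derive v x dv ->
  is_derive (fun y => F (v y)) x (Derive F (v x) * dv).
Proof. intros HF Hv. apply (isd_comp F v); auto. apply isd_Derive; auto. Qed.

Lemma smooth2_facts (u : R -> R -> R) : smooth2 u ->
  (forall t x, is_derive (fun s => u s x) t (jet_ut u t x)) /\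
  (forall t x, is_derive (fun y => u t y) x (jet_ux u t x)) /\
  (forall t x, is_derive (fun y => jet_ux u t y) x (jet_uxx u t x)).
Proof.
  intros Hu. split; [|split]; intros t x.
  - apply isd_Derive. apply (proj1 (proj1 (Hu nil) t x)).
  - apply isd_Derive. apply (proj2 (proj1 (Hu nil) t x)).
  - apply isd_Derive. apply (proj2 (proj1 (Hu (1%nat :: nil)) t x)).
Qed.


Lemma forward_adj (f g h E : R -> R) (K Kt Kx Kxx : R -> R -> R)
  (Hf : forall w, ex_derive f w) (Hg : forall w, ex_derive g w) (Hh : forall w, ex_derive h w)
  (Hg0 : forall w, g w <> 0)
  (HE : forall w, is_derive E w (- E w * ((Derive g w + h w) / g w)))
  (HKt : forall t x, is_derive (fun s => K s x) t (Kt t x))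
  (HKx : forall t x, is_derive (fun y => K t y) x (Kx t x))
  (HKxx : forall t x, is_derive (fun y => Kx t y) x (Kxx t x))
  (PDE : forall t x w, - Kt t x + f w * Kx t x - g w * Kxx t x = 0)
  (u : R -> R -> R) (Hu : smooth2 u) (t x : R) :
  adjoint_KS f g h u (fun t x => K t x * E (u t x)) t x =
  (K t x * E (u t x) * ((Derive g (u t x) + h (u t x)) / g (u t x))) *
  KS f g h t x (u t x) (jet_ut u t x) (jet_ux u t x) (jet_uxx u t x).
Proof.
  destruct (smooth2_facts u Hu) as [Ut [Ux Uxx]].
  set (EE := fun w => - E w * ((Derive g w + h w) / g w)).
  assert (HEc : forall (v : R -> R) y dv, is_derive v y dv -> is_derive (fun z => E (v z)) y (EE (v y) * dv)).
  { intros v y dv Hv. apply (isd_comp E v); auto. }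
  assert (HG : forall w, is_derive (fun w => E w * g w) w (- (E w * h w))).
  { intros w. eapply isd_val. apply isd_mult. apply HE. apply isd_Derive; auto.
    field. auto. }
  assert (Inner : forall y, Derive (fun z => -(K t z * E (u t z) * g (u t z))) y =
     -(Kx t y * (E (u t y) * g (u t y)) + K t y * (- (E (u t y) * h (u t y)) * jet_ux u t y))).
  { intros y. apply Derive_isd.
    apply (isd_ext (fun z => - (K t z * (E (u t z) * g (u t z))))). intros; ring.
    eapply isd_val. apply isd_opp. apply isd_mult. auto.
    apply (isd_comp (fun w => E w * g w) (fun z => u t z)). apply HG. apply Ux. cbv beta; ring. }
  rewrite adjoint_reduce; auto.
  setoid_rewrite Inner.
  rewrite (Derive_isd (fun s => K s x * E (u s x)) t (Kt t x * E (u t x) + K t x * (EE (u t x) * jet_ut u t x))).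
  2:{ eapply isd_val. apply isd_mult. apply HKt. apply (HEc (fun s => u s x)). apply Ut. cbv beta; ring. }
  rewrite (Derive_isd (fun y => K t y * E (u t y) * (- f (u t y) + 2 * h (u t y) * jet_ux u t y)) x
     ((Kx t x * E (u t x) + K t x * (EE (u t x) * jet_ux u t x)) * (- f (u t x) + 2 * h (u t x) * jet_ux u t x)
      + K t x * E (u t x) * (- (Derive f (u t x) * jet_ux u t x) + 2 * (Derive h (u t x) * jet_ux u t x * jet_ux u t x + h (u t x) * jet_uxx u t x)))).
  2:{ eapply isd_val. apply isd_mult. apply isd_mult. apply HKx. apply (HEc (fun s => u t s)). apply Ux. apply isd_plus. apply isd_opp. apply (isd_Fcomp f (fun y => u t y)). exact Hf. apply Ux. apply isd_mult. apply (isd_mult (fun _ => 2) (fun y => h (u t y))). apply isd_const. apply (isd_Fcomp h (fun y => u t y)). exact Hh. apply Ux. apply Uxx. cbv beta; ring. }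
  rewrite (Derive_isd _ x
     (-(Kxx t x * (E (u t x) * g (u t x)) + Kx t x * (- (E (u t x) * h (u t x)) * jet_ux u t x)
        + (Kx t x * (- (E (u t x) * h (u t x)) * jet_ux u t x)
           + K t x * (- ((EE (u t x) * jet_ux u t x * h (u t x) + E (u t x) * (Derive h (u t x) * jet_ux u t x)) * jet_ux u t x
                         + E (u t x) * h (u t x) * jet_uxx u t x)))))).
  2:{ eapply isd_val. apply isd_opp. apply isd_plus. apply isd_mult. apply HKxx.
      apply (isd_comp (fun w => E w * g w) (fun z => u t z)). apply HG. apply Ux.
      apply isd_mult. apply HKx. apply isd_mult. apply isd_opp.
      apply (isd_mult (fun y => E (u t y)) (fun y => h (u t y))). apply (HEc (fun s => u t s)). apply Ux.
      apply (isd_Fcomp h (fun y => u t y)). exact Hh. apply Ux. apply Uxx.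
      cbv beta; ring. }
  unfold KS, EE.
  assert (HKt' : Kt t x = f (u t x) * Kx t x - g (u t x) * Kxx t x).
  { specialize (PDE t x (u t x)). lra. }
  rewrite HKt'. assert (Hgu := Hg0 (u t x)). generalize dependent (g (u t x)). intros. field. exact Hgu.

Qed.

Lemma cont_add {T : UniformSpace} (f g : T -> R) x : continuous f x -> continuous g x -> continuous (fun p => f p + g p) x.
Proof. intros; apply (continuous_plus f g); auto. Qed.
Lemma cont_mul {T : UniformSpace} (f g : T -> R) x : continuous f x -> continuous g x -> continuous (fun p => f p * g p) x.
Proof. intros; apply (continuous_mult f g); auto. Qed.
Lemma cont_sub {T : UniformSpace} (f g : T -> R) x : continuous f x -> continuous g x -> continuous (fun p => f p - g p) x.
Proof. intros; apply (continuous_minus f g); auto. Qed.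
Lemma cont_cst {T : UniformSpace} (c : R) x : continuous (fun _ : T => c) x.
Proof. apply continuous_const. Qed.
Lemma cont_comp1 {T : UniformSpace} (f : T -> R) (F : R -> R) x : continuous f x -> (forall y, ex_derive F y) ->
  continuous (fun p => F (f p)) x.
Proof. intros Hf HF. apply (continuous_comp f F); auto. apply (@ex_derive_continuous R_AbsRing R_NormedModule F); auto. Qed.

Lemma cont_pair {U V W : UniformSpace} (f : U -> V) (g : U -> W) x :
  continuous f x -> continuous g x -> continuous (fun u => (f u, g u)) x.
Proof.
  intros Hf Hg. apply (continuous_comp_2 f g pair); auto.
  apply (continuous_ext (fun y => y)). intros [a b]; reflexivity.
  apply continuous_id.
Qed.

Lemma cont_fst {U V : UniformSpace} (x : U * V) : continuous fst x.
Proof. destruct x; apply continuous_fst. Qed.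
Lemma cont_snd {U V : UniformSpace} (x : U * V) : continuous snd x.
Proof. destruct x; apply continuous_snd. Qed.

Definition Qp (t0 x0 A B C D : R) : R -> R -> R :=
  fun s y => A + B * (s - t0) + C * (y - x0) + D * ((y - x0) * (y - x0)).

Lemma Qp_dt t0 x0 A B C D s y : is_derive (fun s => Qp t0 x0 A B C D s y) s B.
Proof. unfold Qp. eapply isd_val.
  apply isd_plus. apply isd_plus. apply isd_plus. apply isd_const.
  apply (isd_mult (fun _ => B)). apply isd_const. apply isd_minus. apply isd_id. apply isd_const.
  apply isd_const. apply isd_const. cbv beta; ring. Qed.
Lemma Qp_dx t0 x0 A B C D s y : is_derive (fun y => Qp t0 x0 A B C D s y) y (C + 2 * D * (y - x0)).
Proof. unfold Qp. eapply isd_val.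
  apply isd_plus. apply isd_plus. apply isd_plus. apply isd_const. apply isd_const.
  apply (isd_mult (fun _ => C)). apply isd_const. apply isd_minus. apply isd_id. apply isd_const.
  apply (isd_mult (fun _ => D)). apply isd_const.
  apply isd_mult; (apply isd_minus; [apply isd_id|apply isd_const]).
  cbv beta; ring. Qed.

Lemma iterD2_Qp t0 x0 : forall l A B C D, exists A' B' C' D',
  iterD2 l (Qp t0 x0 A B C D) = Qp t0 x0 A' B' C' D'.
Proof.
  induction l as [|i l IH]; intros A B C D.
  - exists A, B, C, D; reflexivity.
  - destruct (IH A B C D) as (A' & B' & C' & D' & E). simpl. rewrite E.
    destruct i as [|i].
    + exists B', 0, 0, 0. apply functional_extensionality; intro s; apply functional_extensionality; intro y.
      simpl. rewrite (Derive_isd (fun s0 => Qp t0 x0 A' B' C' D' s0 y) s B'); [unfold Qp; ring|apply Qp_dt].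
    + exists C', 0, (2 * D'), 0. apply functional_extensionality; intro s; apply functional_extensionality; intro y.
      simpl. rewrite (Derive_isd (fun y0 => Qp t0 x0 A' B' C' D' s y0) y (C' + 2 * D' * (y - x0))); [unfold Qp; ring|apply Qp_dx].
Qed.

Lemma Qp_smooth t0 x0 A B C D : smooth2 (Qp t0 x0 A B C D).
Proof.
  intros l. destruct (iterD2_Qp t0 x0 l A B C D) as (A' & B' & C' & D' & E). rewrite E.
  split.
  - intros t x; split; eexists; [apply Qp_dt|apply Qp_dx].
  - intros t x. unfold Qp.
    apply cont_add. apply cont_add. apply cont_add. apply cont_cst.
    apply cont_mul. apply cont_cst. apply cont_sub. apply cont_fst. apply cont_cst.
    apply cont_mul. apply cont_cst. apply cont_sub. apply cont_snd. apply cont_cst.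
    apply cont_mul. apply cont_cst. apply cont_mul; (apply cont_sub; [apply cont_snd|apply cont_cst]).
Qed.

Definition Kf (a q p m n c : R) : R -> R -> R :=
  fun t x => p * exp (a * x + q * t) + m * x + n * t + c.

Lemma Kf_dt a q p m n c t x : is_derive (fun s => Kf a q p m n c s x) t (p * q * exp (a * x + q * t) + n).
Proof. unfold Kf. eapply isd_val.
  apply isd_plus. apply isd_plus. apply isd_plus.
  apply (isd_mult (fun _ => p)). apply isd_const.
  apply (isd_comp exp (fun s => a * x + q * s)). apply isd_exp.
  apply isd_plus. apply isd_const. apply (isd_mult (fun _ => q)). apply isd_const. apply isd_id.
  apply isd_const. apply (isd_mult (fun _ => n)). apply isd_const. apply isd_id. apply isd_const.
  cbv beta; ring. Qed.

Lemma Kf_dx a q p m n c t x : is_derive (fun y => Kf a q p m n c t y) x (p * a * exp (a * x + q * t) + m).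
Proof. unfold Kf. eapply isd_val.
  apply isd_plus. apply isd_plus. apply isd_plus.
  apply (isd_mult (fun _ => p)). apply isd_const.
  apply (isd_comp exp (fun y => a * y + q * t)). apply isd_exp.
  apply isd_plus. apply (isd_mult (fun _ => a)). apply isd_const. apply isd_id. apply isd_const.
  apply (isd_mult (fun _ => m)). apply isd_const. apply isd_id. apply isd_const. apply isd_const.
  cbv beta; ring. Qed.

Definition Fam (E : R -> R) (a q p m n c : R) (k : nat) : R -> R -> R -> R :=
  fun t x w => Kf a q p m n c t x * Derive_n E k w.

Lemma iterD3_Fam E a q : forall l p m n c k, exists p' m' n' c' k',
  iterD3 l (Fam E a q p m n c k) = Fam E a q p' m' n' c' k'.
Proof.
  induction l as [|i l IH]; intros p m n c k.
  - exists p, m, n, c, k; reflexivity.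
  - destruct (IH p m n c k) as (p' & m' & n' & c' & k' & Eq). simpl. rewrite Eq.
    destruct i as [|[|i]].
    + exists (p' * q), 0, 0, n', k'.
      apply functional_extensionality; intro t; apply functional_extensionality; intro x;
      apply functional_extensionality; intro w. simpl. unfold Fam.
      rewrite Derive_scal_l.
      rewrite (Derive_isd (fun s => Kf a q p' m' n' c' s x) t (p' * q * exp (a * x + q * t) + n')).
      unfold Kf; ring. apply Kf_dt.
    + exists (p' * a), 0, 0, m', k'.
      apply functional_extensionality; intro t; apply functional_extensionality; intro x;
      apply functional_extensionality; intro w. simpl. unfold Fam.
      rewrite Derive_scal_l.
      rewrite (Derive_isd (Kf a q p' m' n' c' t) x (p' * a * exp (a * x + q * t) + m')).
      unfold Kf; ring. apply Kf_dx.
    + exists p', m', n', c', (S k').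
      apply functional_extensionality; intro t; apply functional_extensionality; intro x;
      apply functional_extensionality; intro w. simpl. unfold Fam.
      rewrite Derive_scal. reflexivity.
Qed.

Lemma cont_ff {U V W : UniformSpace} (x : U * V * W) : continuous (fun p : U * V * W => fst (fst p)) x.
Proof. apply (continuous_comp fst fst). apply cont_fst. apply cont_fst. Qed.
Lemma cont_sf {U V W : UniformSpace} (x : U * V * W) : continuous (fun p : U * V * W => snd (fst p)) x.
Proof. apply (continuous_comp fst snd). apply cont_fst. apply cont_snd. Qed.

Lemma Fam_smooth E a q p m n c k : smooth1 E -> smooth3 (Fam E a q p m n c k).
Proof.
  intros HE l. destruct (iterD3_Fam E a q l p m n c k) as (p' & m' & n' & c' & k' & Eq). rewrite Eq.
  split.
  - intros t x w. unfold Fam. split; [|split].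
    + eexists. apply (isd_mult (fun s => Kf a q p' m' n' c' s x) (fun _ => Derive_n E k' w)).
      apply Kf_dt. apply isd_const.
    + eexists. apply (isd_mult (fun y => Kf a q p' m' n' c' t y) (fun _ => Derive_n E k' w)).
      apply Kf_dx. apply isd_const.
    + eexists. apply (isd_mult (fun _ => Kf a q p' m' n' c' t x) (Derive_n E k')).
      apply isd_const. apply isd_Derive. apply HE.
  - intros t x w. unfold Fam, Kf.
    apply cont_mul.
    + apply cont_add. apply cont_add. apply cont_add.
      apply cont_mul. apply cont_cst.
      apply (cont_comp1 _ exp). apply cont_add.
      apply cont_mul. apply cont_cst. apply cont_sf.
      apply cont_mul. apply cont_cst. apply cont_ff.
      intros y; eexists; apply isd_exp.
      apply cont_mul. apply cont_cst. apply cont_sf.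
      apply cont_mul. apply cont_cst. apply cont_ff.
      apply cont_cst.
    + apply (cont_comp1 _ (Derive_n E k')). apply cont_snd. apply HE.
Qed.

Lemma forward_nsa (f g h P : R -> R) (Hf : smooth1 f) (Hg : smooth1 g) (Hh : smooth1 h)
  (Hg0 : forall w, g w <> 0)
  (HP : forall w, is_derive P w ((Derive g w + h w) / g w))
  (a q p m n c : R)
  (PDE : forall t x w, - (p * q * exp (a * x + q * t) + n) + f w * (p * a * exp (a * x + q * t) + m)
                       - g w * (p * a * a * exp (a * x + q * t)) = 0)
  (NZ : exists t x, Kf a q p m n c t x <> 0) :
  nsa_substitution f g h (fun t x w => Kf a q p m n c t x * exp (- P w)).
Proof.
  assert (Hf' : forall w, ex_derive f w) by (intros; apply (Hf 0%nat)).
  assert (Hg' : forall w, ex_derive g w) by (intros; apply (Hg 0%nat)).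
  assert (Hh' : forall w, ex_derive h w) by (intros; apply (Hh 0%nat)).
  split; [|split].
  - exact (Fam_smooth (fun w => exp (- P w)) a q p m n c 0 (E_smooth g h P Hg Hh Hg0 HP)).
  - destruct NZ as (t & x & Hn). exists t, x, 0. apply Rmult_integral_contrapositive; split; auto.
    apply Rgt_not_eq, exp_pos.
  - exists (fun t x w _ _ _ => Kf a q p m n c t x * exp (- P w) * ((Derive g w + h w) / g w)).
    intros u Hu t x.
    apply (forward_adj f g h (fun w => exp (- P w)) (Kf a q p m n c)
             (fun t x => p * q * exp (a * x + q * t) + n)
             (fun t x => p * a * exp (a * x + q * t) + m)
             (fun t x => p * a * a * exp (a * x + q * t))); auto.
    + intros w. apply E_deriv. auto.
    + intros t' x'. apply Kf_dt.
    + intros t' x'. apply Kf_dx.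
    + intros t' x'. apply (isd_ext (Kf a q (p * a) 0 0 m t')).
      intros y. unfold Kf. ring. eapply isd_val. apply Kf_dx. ring.
Qed.

Lemma diff2 (F : R -> R -> R) (dFx dFy : R -> R -> R) y z :
  (forall y z, is_derive (fun y' => F y' z) y (dFx y z)) ->
  (forall y z, is_derive (fun z' => F y z') z (dFy y z)) ->
  continuous (fun u : R * R => dFx (fst u) (snd u)) (y, z) ->
  differentiable_pt_lim F y z (dFx y z) (dFy y z).
Proof.
  intros H1 H2 H3. apply filterdiff_differentiable_pt_lim.
  apply (is_derive_filterdiff F y z dFx (dFy y z)); auto.
  apply filter_forall. intros u. apply H1.
Qed.

Lemma comp2 (F : R -> R -> R) (dFx dFy : R -> R -> R) (a b : R -> R) s0 da db :
  (forall y z, is_derive (fun y' => F y' z) y (dFx y z)) ->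
  (forall y z, is_derive (fun z' => F y z') z (dFy y z)) ->
  continuous (fun u : R * R => dFx (fst u) (snd u)) (a s0, b s0) ->
  is_derive a s0 da -> is_derive b s0 db ->
  is_derive (fun s => F (a s) (b s)) s0 (dFx (a s0) (b s0) * da + dFy (a s0) (b s0) * db).
Proof.
  intros H1 H2 H3 Ha Hb. apply is_derive_Reals.
  apply derivable_pt_lim_comp_2d.
  apply diff2; auto. apply is_derive_Reals; auto. apply is_derive_Reals; auto.
Qed.

Lemma chain_x (φ : R -> R -> R -> R) (Hφ : smooth3 φ) l t0 (a b : R -> R) s0 da db :
  is_derive a s0 da -> is_derive b s0 db ->
  is_derive (fun s => iterD3 l φ t0 (a s) (b s)) s0
    (pd3 1 (iterD3 l φ) t0 (a s0) (b s0) * da + pd3 2 (iterD3 l φ) t0 (a s0) (b s0) * db).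
Proof.
  intros Ha Hb.
  apply (comp2 (fun y z => iterD3 l φ t0 y z) (fun y z => pd3 1 (iterD3 l φ) t0 y z)
               (fun y z => pd3 2 (iterD3 l φ) t0 y z)); auto.
  - intros y z. apply isd_Derive. apply (proj1 (proj2 (proj1 (Hφ l) t0 y z))).
  - intros y z. apply isd_Derive. apply (proj2 (proj2 (proj1 (Hφ l) t0 y z))).
  - pose proof (proj2 (Hφ (1%nat :: l)) t0 (a s0) (b s0)) as Hc.
    apply (continuous_ext (fun u : R * R => iterD3 (1%nat :: l) φ (fst (fst ((t0, fst u), snd u))) (snd (fst ((t0, fst u), snd u))) (snd ((t0, fst u), snd u)))).
    { intros; reflexivity. }
    apply (continuous_comp (fun u : R * R => ((t0, fst u), snd u))
      (fun p : R * R * R => iterD3 (1%nat :: l) φ (fst (fst p)) (snd (fst p)) (snd p))).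
    + apply cont_pair. apply cont_pair. apply continuous_const. apply cont_fst. apply cont_snd.
    + exact Hc.
Qed.

Lemma chain_t (φ : R -> R -> R -> R) (Hφ : smooth3 φ) l x0 (a b : R -> R) s0 da db :
  is_derive a s0 da -> is_derive b s0 db ->
  is_derive (fun s => iterD3 l φ (a s) x0 (b s)) s0
    (pd3 0 (iterD3 l φ) (a s0) x0 (b s0) * da + pd3 2 (iterD3 l φ) (a s0) x0 (b s0) * db).
Proof.
  intros Ha Hb.
  apply (comp2 (fun y z => iterD3 l φ y x0 z) (fun y z => pd3 0 (iterD3 l φ) y x0 z)
               (fun y z => pd3 2 (iterD3 l φ) y x0 z)); auto.
  - intros y z. apply isd_Derive. apply (proj1 (proj1 (Hφ l) y x0 z)).
  - intros y z. apply isd_Derive. apply (proj2 (proj2 (proj1 (Hφ l) y x0 z))).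
  - pose proof (proj2 (Hφ (0%nat :: l)) (a s0) x0 (b s0)) as Hc.
    apply (continuous_ext (fun u : R * R => iterD3 (0%nat :: l) φ (fst (fst ((fst u, x0), snd u))) (snd (fst ((fst u, x0), snd u))) (snd ((fst u, x0), snd u)))).
    { intros; reflexivity. }
    apply (continuous_comp (fun u : R * R => ((fst u, x0), snd u))
      (fun p : R * R * R => iterD3 (0%nat :: l) φ (fst (fst p)) (snd (fst p)) (snd p))).
    + apply cont_pair. apply cont_pair. apply cont_fst. apply continuous_const. apply cont_snd.
    + exact Hc.
Qed.

Lemma backward_core (f g h : R -> R) (φ : R -> R -> R -> R)
  (Hf : smooth1 f) (Hg : smooth1 g) (Hh : smooth1 h)
  (Hns : nsa_substitution f g h φ) (t0 x0 w r : R) :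
  - pd3 0 φ t0 x0 w + f w * pd3 1 φ t0 x0 w - g w * pd3 1 (pd3 1 φ) t0 x0 w
  - 2 * r * (pd3 2 φ t0 x0 w * g w + φ t0 x0 w * Derive g w + h w * φ t0 x0 w) = 0.
Proof.
  assert (Hf' : forall w, ex_derive f w) by (intros; apply (Hf 0%nat)).
  assert (Hg' : forall w, ex_derive g w) by (intros; apply (Hg 0%nat)).
  assert (Hh' : forall w, ex_derive h w) by (intros; apply (Hh 0%nat)).
  assert (Hg'' : forall w, ex_derive (Derive g) w) by (intros; apply (Hg 1%nat)).
  destruct Hns as (Hφ & _ & λ & Hλ).
  set (u := Qp t0 x0 w (g w * r) 0 (r / 2)).
  assert (Hsu : smooth2 u) by apply Qp_smooth.
  specialize (Hλ u Hsu t0 x0).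
  assert (Hu0 : u t0 x0 = w) by (unfold u, Qp; ring).
  assert (Ut : forall s y, jet_ut u s y = g w * r).
  { intros s y. unfold jet_ut. apply Derive_isd. eapply isd_val. apply Qp_dt. reflexivity. }
  assert (Uxd : forall s y, is_derive (fun y => u s y) y (r * (y - x0))).
  { intros s y. eapply isd_val. apply Qp_dx. field. }
  assert (Ux : forall s y, jet_ux u s y = r * (y - x0)).
  { intros s y. unfold jet_ux. apply Derive_isd. apply Uxd. }
  assert (Uxx : forall s y, jet_uxx u s y = r).
  { intros s y. unfold jet_uxx. setoid_rewrite Ux. apply Derive_isd. eapply isd_val.
    apply (isd_mult (fun _ => r)). apply isd_const. apply isd_minus. apply isd_id. apply isd_const.
    cbv beta; ring. }
  assert (KS0 : KS f g h t0 x0 (u t0 x0) (jet_ut u t0 x0) (jet_ux u t0 x0) (jet_uxx u t0 x0) = 0).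
  { unfold KS. rewrite Ut, Ux, Uxx, Hu0. ring. }
  rewrite KS0, Rmult_0_r in Hλ.
  rewrite adjoint_reduce in Hλ; auto.
  cbv beta in Hλ.
  setoid_rewrite Ux in Hλ. rewrite Uxx in Hλ.
  assert (Inner : forall y, Derive (fun z => -(φ t0 z (u t0 z) * g (u t0 z))) y =
     -((pd3 1 φ t0 y (u t0 y) * 1 + pd3 2 φ t0 y (u t0 y) * (r * (y - x0))) * g (u t0 y)
       + φ t0 y (u t0 y) * (Derive g (u t0 y) * (r * (y - x0))))).
  { intros y. apply Derive_isd. apply isd_opp.
    apply (isd_mult (fun z => φ t0 z (u t0 z)) (fun z => g (u t0 z))).
    apply (chain_x φ Hφ nil t0 (fun z => z) (fun z => u t0 z) y 1 (r * (y - x0))).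
    apply isd_id. apply Uxd.
    apply (isd_Fcomp g (fun z => u t0 z)). exact Hg'. apply Uxd. }
  setoid_rewrite Inner in Hλ.
  assert (D1 : is_derive (fun s : R => φ s x0 (u s x0)) t0
                 (pd3 0 φ t0 x0 (u t0 x0) * 1 + pd3 2 φ t0 x0 (u t0 x0) * (g w * r))).
  { apply (chain_t φ Hφ nil x0 (fun s => s) (fun s => u s x0) t0 1 (g w * r)).
    apply isd_id. eapply isd_val. apply Qp_dt. reflexivity. }
  rewrite (Derive_isd _ _ _ D1) in Hλ.
  eassert (D2 : is_derive (fun y : R => φ t0 y (u t0 y) * (- f (u t0 y) + 2 * h (u t0 y) * (r * (y - x0)))) x0 _).
  { apply (isd_mult (fun y => φ t0 y (u t0 y))).
    apply (chain_x φ Hφ nil t0 (fun z => z) (fun z => u t0 z) x0 1 (r * (x0 - x0))).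
    apply isd_id. apply Uxd.
    apply isd_plus. apply isd_opp. apply (isd_Fcomp f (fun z => u t0 z)). exact Hf'. apply Uxd.
    apply isd_mult. apply (isd_mult (fun _ => 2) (fun z => h (u t0 z))). apply isd_const.
    apply (isd_Fcomp h (fun z => u t0 z)). exact Hh'. apply Uxd.
    apply (isd_mult (fun _ => r)). apply isd_const. apply isd_minus. apply isd_id. apply isd_const. }
  rewrite (Derive_isd _ _ _ D2) in Hλ.
  eassert (D3 : is_derive (fun y : R => -((pd3 1 φ t0 y (u t0 y) * 1 + pd3 2 φ t0 y (u t0 y) * (r * (y - x0))) * g (u t0 y)
       + φ t0 y (u t0 y) * (Derive g (u t0 y) * (r * (y - x0))))) x0 _).
  { apply isd_opp. apply isd_plus.
    - apply isd_mult. apply isd_plus.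
      + apply (isd_mult (fun y => pd3 1 φ t0 y (u t0 y)) (fun _ => 1)).
        apply (chain_x φ Hφ (1%nat :: nil) t0 (fun z => z) (fun z => u t0 z) x0 1 (r * (x0 - x0))).
        apply isd_id. apply Uxd. apply isd_const.
      + apply (isd_mult (fun y => pd3 2 φ t0 y (u t0 y))).
        apply (chain_x φ Hφ (2%nat :: nil) t0 (fun z => z) (fun z => u t0 z) x0 1 (r * (x0 - x0))).
        apply isd_id. apply Uxd.
        apply (isd_mult (fun _ => r)). apply isd_const. apply isd_minus. apply isd_id. apply isd_const.
      + apply (isd_Fcomp g (fun z => u t0 z)). exact Hg'. apply Uxd.
    - apply (isd_mult (fun y => φ t0 y (u t0 y))).
      apply (chain_x φ Hφ nil t0 (fun z => z) (fun z => u t0 z) x0 1 (r * (x0 - x0))).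
      apply isd_id. apply Uxd.
      apply isd_mult. apply (isd_Fcomp (Derive g) (fun z => u t0 z)). exact Hg''. apply Uxd.
      apply (isd_mult (fun _ => r)). apply isd_const. apply isd_minus. apply isd_id. apply isd_const. }
  rewrite (Derive_isd _ _ _ D3) in Hλ.
  cbv beta in Hλ. rewrite Hu0 in Hλ.
  change (iterD3 (1%nat :: nil) φ) with (pd3 1 φ) in Hλ.
  change (iterD3 (2%nat :: nil) φ) with (pd3 2 φ) in Hλ.
  change (iterD3 nil φ) with φ in Hλ.
  rewrite <- Hλ. ring.
Qed.

Lemma backward_struct (f g h P : R -> R) (φ : R -> R -> R -> R)
  (Hf : smooth1 f) (Hg : smooth1 g) (Hh : smooth1 h) (Hg0 : forall w, g w <> 0)
  (HP : forall w, is_derive P w ((Derive g w + h w) / g w))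
  (Hns : nsa_substitution f g h φ) :
  exists C : R -> R -> R,
    (forall t x w, φ t x w = C t x * exp (- P w)) /\
    (exists t x, C t x <> 0) /\
    (forall t x, ex_derive (fun s => C s x) t) /\
    (forall t x, ex_derive (fun y => C t y) x) /\
    (forall t x, ex_derive (fun y => Derive (fun y' => C t y') y) x) /\
    (forall t x w, - Derive (fun s => C s x) t + f w * Derive (fun y => C t y) x
                   - g w * Derive (fun y => Derive (fun y' => C t y') y) x = 0).
Proof.
  pose proof (backward_core f g h φ Hf Hg Hh Hns) as Hc.
  destruct Hns as (Hφ & NZ & _).
  set (k := exp (P 0)).
  exists (fun t x => φ t x 0 * k).
  assert (Heq : forall t x w, φ t x w = φ t x 0 * k * exp (- P w)).
  { intros t x w.
    assert (Hconst : forall z, is_derive (fun z => φ t x z * exp (P z)) z 0).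
    { intros z. eapply isd_val. apply isd_mult.
      apply isd_Derive. apply (proj2 (proj2 (proj1 (Hφ nil) t x z))).
      apply (isd_comp exp P). apply isd_exp. apply HP.
      cbv beta. pose proof (Hc t x z 0) as H0. pose proof (Hc t x z 1) as H1.
      assert (H2 : pd3 2 φ t x z * g z + φ t x z * Derive g z + h z * φ t x z = 0) by lra.
      change (Derive (φ t x) z) with (pd3 2 φ t x z).
      assert (Hgz := Hg0 z).
      assert (E3 : pd3 2 φ t x z = - (φ t x z * Derive g z + h z * φ t x z) / g z).
      { field_simplify_eq; auto. lra. }
      rewrite E3. field. auto. }
    pose proof (const_of_deriv0 _ Hconst w 0) as E0. cbv beta in E0.
    unfold k. rewrite <- E0. rewrite Rmult_assoc, <- exp_plus.
    replace (P w + - P w) with 0 by ring. rewrite exp_0. ring. }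
  split; [exact Heq|].
  split.
  { destruct NZ as (t & x & w & Hn). exists t, x. intros Hz. apply Hn. rewrite Heq, Hz. ring. }
  assert (ExT : forall t x, ex_derive (fun s => φ s x 0 * k) t).
  { intros t x. eexists. apply (isd_mult (fun s => φ s x 0) (fun _ => k)).
    apply isd_Derive. apply (proj1 (proj1 (Hφ nil) t x 0)). apply isd_const. }
  assert (ExX : forall t x, ex_derive (fun y => φ t y 0 * k) x).
  { intros t x. eexists. apply (isd_mult (fun y => φ t y 0) (fun _ => k)).
    apply isd_Derive. apply (proj1 (proj2 (proj1 (Hφ nil) t x 0))). apply isd_const. }
  assert (DX : forall t y, Derive (fun y' => φ t y' 0 * k) y = pd3 1 φ t y 0 * k).
  { intros t y. rewrite Derive_scal_l. reflexivity. }
  split; [exact ExT|]. split; [exact ExX|]. split.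
  { intros t x. apply (ex_derive_ext (fun y => pd3 1 φ t y 0 * k)). intros; symmetry; apply DX. eexists. apply (isd_mult (fun y => pd3 1 φ t y 0) (fun _ => k)).
    apply isd_Derive. apply (proj1 (proj2 (proj1 (Hφ (1%nat :: nil)) t x 0))). apply isd_const. }
  intros t x w.
  pose proof (Hc t x w 0) as H0.
  assert (P0 : pd3 0 φ t x w = Derive (fun s => φ s x 0 * k) t * exp (- P w)).
  { simpl. rewrite <- Derive_scal_l. apply Derive_ext. intros; apply Heq. }
  assert (P1 : forall y, pd3 1 φ t y w = Derive (fun y' => φ t y' 0 * k) y * exp (- P w)).
  { intros y. simpl. rewrite <- Derive_scal_l. apply Derive_ext. intros; apply Heq. }
  assert (P11 : pd3 1 (pd3 1 φ) t x w = Derive (fun y => Derive (fun y' => φ t y' 0 * k) y) x * exp (- P w)).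
  { change (pd3 1 (pd3 1 φ) t x w) with (Derive (fun y => pd3 1 φ t y w) x).
    rewrite <- Derive_scal_l. apply Derive_ext. intros; apply P1. }
  rewrite P0, P1, P11 in H0.
  assert (He := exp_pos (- P w)).
  apply (Rmult_eq_reg_r (exp (- P w))); [|lra].
  rewrite Rmult_0_l. match type of H0 with ?L = _ => transitivity L; [ring|exact H0] end.
Qed.

Definition DT (C : R -> R -> R) t x := Derive (fun s => C s x) t.
Definition DX (C : R -> R -> R) t x := Derive (fun y => C t y) x.
Definition DXX (C : R -> R -> R) t x := Derive (fun y => DX C t y) x.

Lemma DT_isd C : (forall t x, ex_derive (fun s => C s x) t) -> forall t x, is_derive (fun s => C s x) t (DT C t x).
Proof. intros H t x. apply isd_Derive, H. Qed.
Lemma DX_isd C : (forall t x, ex_derive (fun y => C t y) x) -> forall t x, is_derive (fun y => C t y) x (DX C t x).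
Proof. intros H t x. apply isd_Derive, H. Qed.
Lemma DXX_isd C : (forall t x, ex_derive (fun y => DX C t y) x) -> forall t x, is_derive (fun y => DX C t y) x (DXX C t x).
Proof. intros H t x. apply isd_Derive, H. Qed.

Lemma solve_iii (f g : R -> R) (C : R -> R -> R)
  (HCt : forall t x, ex_derive (fun s => C s x) t)
  (HCx : forall t x, ex_derive (fun y => C t y) x)
  (PDE : forall t x w, - DT C t x + f w * DX C t x - g w * DXX C t x = 0)
  (NA : ~ exists a b : R, forall w, f w = a * g w + b) :
  forall t x, C t x = C 0 0.
Proof.
  assert (Cx0 : forall t x, DX C t x = 0).
  { intros t x. destruct (Req_dec (DX C t x) 0) as [|Hn]; auto. exfalso. apply NA.
    exists (DXX C t x / DX C t x), (DT C t x / DX C t x). intros w.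
    pose proof (PDE t x w). field_simplify_eq; auto. lra. }
  assert (Cxx0 : forall t x, DXX C t x = 0).
  { intros t x. unfold DXX. rewrite (Derive_ext _ (fun _ => 0)). apply Derive_const. intros; apply Cx0. }
  assert (Ct0 : forall t x, DT C t x = 0).
  { intros t x. pose proof (PDE t x 0). rewrite Cx0, Cxx0 in H. lra. }
  intros t x.
  rewrite (const_of_deriv0 (fun y => C t y) (fun y => eq_ind _ _ (DX_isd C HCx t y) _ (Cx0 t y)) x 0).
  apply (const_of_deriv0 (fun s => C s 0) (fun s => eq_ind _ _ (DT_isd C HCt s 0) _ (Ct0 s 0)) t 0).
Qed.

Lemma solve_ii (f g : R -> R) (C : R -> R -> R) (b : R)
  (HCt : forall t x, ex_derive (fun s => C s x) t)
  (HCx : forall t x, ex_derive (fun y => C t y) x)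
  (HCxx : forall t x, ex_derive (fun y => DX C t y) x)
  (PDE : forall t x w, - DT C t x + f w * DX C t x - g w * DXX C t x = 0)
  (Hfb : forall w, f w = b) (w1 w2 : R) (Hg12 : g w1 <> g w2) :
  forall t x, C t x = DX C 0 0 * (x + b * t) + C 0 0.
Proof.
  assert (Cxx0 : forall t x, DXX C t x = 0).
  { intros t x. pose proof (PDE t x w1). pose proof (PDE t x w2). rewrite !Hfb in *.
    apply (Rmult_eq_reg_l (g w1 - g w2)); [|lra]. lra. }
  assert (Ct : forall t x, DT C t x = b * DX C t x).
  { intros t x. pose proof (PDE t x w1). rewrite Hfb, Cxx0 in H. lra. }
  set (α := fun t => DX C t 0).
  assert (Cxα : forall t y, DX C t y = α t).
  { intros t y. apply (const_of_deriv0 (fun y => DX C t y)).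
    intros z. eapply isd_val. apply DXX_isd; auto. apply Cxx0. }
  assert (Clin : forall t x, C t x = α t * x + C t 0).
  { intros t x. assert (Hd : forall z, is_derive (fun y => C t y - α t * y) z 0).
    { intros z. eapply isd_val. apply isd_minus. apply DX_isd; auto.
      apply (isd_mult (fun _ => α t) (fun y => y)). apply isd_const. apply isd_id.
      cbv beta. rewrite Cxα. ring. }
    pose proof (const_of_deriv0 _ Hd x 0) as H'. cbv beta in H'. lra. }
  assert (αc : forall t, α t = α 0).
  { intros t. apply (const_of_deriv0 α). intros s.
    apply (isd_ext (fun s => C s 1 - C s 0)). { intros y. rewrite (Clin y 1). ring. }
    eapply isd_val. apply isd_minus; apply DT_isd; auto.
    rewrite !Ct, !Cxα. ring. }
  assert (C0 : forall t, C t 0 = b * α 0 * t + C 0 0).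
  { intros t. assert (Hd : forall z, is_derive (fun s => C s 0 - b * α 0 * s) z 0).
    { intros z. eapply isd_val. apply isd_minus. apply DT_isd; auto.
      apply (isd_mult (fun _ => b * α 0) (fun y => y)). apply isd_const. apply isd_id.
      cbv beta. rewrite Ct, Cxα, αc. ring. }
    pose proof (const_of_deriv0 _ Hd t 0) as H'. cbv beta in H'. lra. }
  intros t x. rewrite Clin, C0, αc. unfold α. ring.
Qed.

Lemma solve_i (f g : R -> R) (C : R -> R -> R) (a b : R)
  (HCt : forall t x, ex_derive (fun s => C s x) t)
  (HCx : forall t x, ex_derive (fun y => C t y) x)
  (HCxx : forall t x, ex_derive (fun y => DX C t y) x)
  (PDE : forall t x w, - DT C t x + f w * DX C t x - g w * DXX C t x = 0)
  (Hfab : forall w, f w = a * g w + b) (w1 w2 : R) (Hf12 : f w1 <> f w2) :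
  exists c1 c2, forall t x, C t x = c1 * exp (a * x + a * b * t) + c2.
Proof.
  assert (Hg12 : g w1 <> g w2). { intros He. apply Hf12. rewrite !Hfab, He. ring. }
  assert (Ha : a <> 0). { intros Ha. apply Hf12. rewrite !Hfab, Ha. ring. }
  assert (Cxx : forall t x, DXX C t x = a * DX C t x).
  { intros t x. pose proof (PDE t x w1). pose proof (PDE t x w2). rewrite !Hfab in *.
    apply (Rmult_eq_reg_l (g w1 - g w2)); [|lra]. lra. }
  assert (Ct : forall t x, DT C t x = b * DX C t x).
  { intros t x. pose proof (PDE t x w1). rewrite Hfab, Cxx in H. lra. }
  assert (Cxe : forall t y, DX C t y = DX C t 0 * exp (a * y)).
  { intros t y. assert (Hd : forall z, is_derive (fun y => DX C t y * exp (- (a * y))) z 0).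
    { intros z. eapply isd_val. apply isd_mult. apply DXX_isd; auto.
      apply (isd_comp exp (fun y => - (a * y))). apply isd_exp.
      apply isd_opp. apply (isd_mult (fun _ => a) (fun y => y)). apply isd_const. apply isd_id.
      cbv beta. rewrite Cxx. ring. }
    pose proof (const_of_deriv0 _ Hd y 0) as H'. cbv beta in H'.
    replace (- (a * 0)) with 0 in H' by ring. rewrite exp_0, Rmult_1_r in H'.
    rewrite <- H', Rmult_assoc, <- exp_plus. replace (- (a * y) + a * y) with 0 by ring.
    rewrite exp_0. ring. }
  set (μ := fun t => DX C t 0 / a).
  assert (Clin : forall t x, C t x = C t 0 + μ t * (exp (a * x) - 1)).
  { intros t x. assert (Hd : forall z, is_derive (fun y => C t y - μ t * exp (a * y)) z 0).
    { intros z. eapply isd_val. apply isd_minus. apply DX_isd; auto.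
      apply (isd_mult (fun _ => μ t) (fun y => exp (a * y))). apply isd_const.
      apply (isd_comp exp (fun y => a * y)). apply isd_exp.
      apply (isd_mult (fun _ => a) (fun y => y)). apply isd_const. apply isd_id.
      cbv beta. rewrite Cxe. unfold μ. field. auto. }
    pose proof (const_of_deriv0 _ Hd x 0) as H'. cbv beta in H'.
    replace (a * 0) with 0 in H' by ring. rewrite exp_0 in H'. lra. }
  assert (Hea : exp a - 1 <> 0).
  { intros He. apply Ha. apply exp_inv. rewrite exp_0. lra. }
  assert (μd : forall s, is_derive μ s (a * b * μ s)).
  { intros s. apply (isd_ext (fun s => (C s 1 - C s 0) / (exp a - 1))).
    { intros y. rewrite (Clin y 1). replace (a * 1) with a by ring. field. auto. }
    eapply isd_val. apply (isd_mult (fun s => C s 1 - C s 0) (fun _ => / (exp a - 1))).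
    apply isd_minus; apply DT_isd; auto. apply isd_const.
    rewrite !Ct. rewrite (Cxe s 1). unfold μ. replace (a * 1) with a by ring. field. split; auto. }
  assert (μe : forall t, μ t = μ 0 * exp (a * b * t)).
  { intros t. assert (Hd : forall z, is_derive (fun s => μ s * exp (- (a * b * s))) z 0).
    { intros z. eapply isd_val. apply isd_mult. apply μd.
      apply (isd_comp exp (fun s => - (a * b * s))). apply isd_exp.
      apply isd_opp. apply (isd_mult (fun _ => a * b) (fun y => y)). apply isd_const. apply isd_id.
      cbv beta. ring. }
    pose proof (const_of_deriv0 _ Hd t 0) as H'. cbv beta in H'.
    replace (- (a * b * 0)) with 0 in H' by ring. rewrite exp_0, Rmult_1_r in H'.
    rewrite <- H', Rmult_assoc, <- exp_plus. replace (- (a * b * t) + a * b * t) with 0 by ring.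
    rewrite exp_0. ring. }
  assert (C0 : forall t, C t 0 = C 0 0 - μ 0 + μ 0 * exp (a * b * t)).
  { intros t. assert (Hd : forall z, is_derive (fun s => C s 0 - μ 0 * exp (a * b * s)) z 0).
    { intros z. eapply isd_val. apply isd_minus. apply DT_isd; auto.
      apply (isd_mult (fun _ => μ 0) (fun s => exp (a * b * s))). apply isd_const.
      apply (isd_comp exp (fun s => a * b * s)). apply isd_exp.
      apply (isd_mult (fun _ => a * b) (fun y => y)). apply isd_const. apply isd_id.
      cbv beta. rewrite Ct. replace (DX C z 0) with (a * μ z) by (unfold μ; field; auto). rewrite (μe z). ring. }
    pose proof (const_of_deriv0 _ Hd t 0) as H'. cbv beta in H'.
    replace (a * b * 0) with 0 in H' by ring. rewrite exp_0 in H'. lra. }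
  exists (μ 0), (C 0 0 - μ 0). intros t x.
  rewrite Clin, C0, (μe t), exp_plus. ring.
Qed.

Lemma phi_ext (φ : R -> R -> R -> R) (K : R -> R -> R) (E : R -> R) :
  (forall t x w, φ t x w = K t x * E w) -> φ = fun t x w => K t x * E w.
Proof.
  intros H. apply functional_extensionality; intro t; apply functional_extensionality; intro x;
  apply functional_extensionality; intro w. apply H.
Qed.

Theorem theorem1 (f g h : R -> R)
  (Hf : smooth1 f) (Hg : smooth1 g) (Hh : smooth1 h)
  (Hf0 : forall w, f w <> 0) (Hg0 : forall w, g w <> 0)
  (Hg'0 : forall w, Derive g w <> 0)
  (P : R -> R) (HP : forall w, is_derive P w ((Derive g w + h w) / g w)) :
  let E := fun w => exp (- P w) in
  nonlinearly_self_adjoint f g h /\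
  (* (i) *)
  (forall a b : R, (forall w, f w = a * g w + b) -> (exists w1 w2, f w1 <> f w2) ->
     forall φ, nsa_substitution f g h φ <->
       exists c1 c2 : R, (c1, c2) <> (0, 0) /\
         forall t x w, φ t x w = (c1 * exp (a * x + a * b * t) + c2) * E w) /\
  (* (ii) *)
  (forall b : R, (forall w, f w = b) ->
     forall φ, nsa_substitution f g h φ <->
       exists c3 c4 : R, (c3, c4) <> (0, 0) /\
         forall t x w, φ t x w = (c3 * (x + b * t) + c4) * E w) /\
  (* (iii) *)
  ((~ exists a b : R, forall w, f w = a * g w + b) ->
     forall φ, nsa_substitution f g h φ <->
       exists c5 : R, c5 <> 0 /\ forall t x w, φ t x w = c5 * E w).
Proof.
  intros E. unfold E.
  assert (Gnc : exists w1 w2, g w1 <> g w2).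
  { apply NNPP. intros Hn. apply (Hg'0 0).
    rewrite (Derive_ext g (fun _ => g 0)). apply Derive_const.
    intros y. apply NNPP. intros Hy. apply Hn. exists y, 0. auto. }
  destruct Gnc as (w1 & w2 & Hg12).
  split; [|split; [|split]].
  - exists (fun t x w => Kf 0 0 0 0 0 1 t x * exp (- P w)).
    apply forward_nsa; auto.
    + intros; ring.
    + exists 0, 0. unfold Kf. intros H. ring_simplify in H. lra.
  - intros a b Hfab (v1 & v2 & Hf12) φ. split.
    + intros Hns.
      destruct (backward_struct f g h P φ Hf Hg Hh Hg0 HP Hns)
        as (C & Heq & NZ & HCt & HCx & HCxx & PDE).
      destruct (solve_i f g C a b HCt HCx HCxx PDE Hfab v1 v2 Hf12) as (c1 & c2 & HC).
      exists c1, c2. split.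
      * intros Hc. injection Hc as -> ->. destruct NZ as (t & x & Hn). apply Hn. rewrite HC. ring.
      * intros t x w. rewrite Heq, HC. reflexivity.
    + intros (c1 & c2 & Hc & Hφ).
      assert (Ha : a <> 0). { intros Ha. apply Hf12. rewrite !Hfab, Ha. ring. }
      rewrite (phi_ext φ (Kf a (a * b) c1 0 0 c2) (fun w => exp (- P w))).
      2:{ intros t x w. rewrite Hφ. unfold Kf. ring. }
      apply forward_nsa; auto.
      * intros t x w. rewrite Hfab. ring.
      * apply NNPP. intros Hn.
        assert (K0 : Kf a (a * b) c1 0 0 c2 0 0 = 0) by (apply NNPP; intros H; apply Hn; exists 0, 0; auto).
        assert (K1 : Kf a (a * b) c1 0 0 c2 0 1 = 0) by (apply NNPP; intros H; apply Hn; exists 0, 1; auto).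
        unfold Kf in K0, K1. rewrite Rmult_0_r, Rmult_0_r, Rplus_0_r, exp_0 in K0.
        rewrite Rmult_0_r, Rplus_0_r, Rmult_1_r in K1.
        assert (Hea : exp a - 1 <> 0).
        { intros He. apply Ha. apply exp_inv. rewrite exp_0. lra. }
        assert (c1 = 0).
        { apply (Rmult_eq_reg_r (exp a - 1)); auto. lra. }
        apply Hc. f_equal; lra.
  - intros b Hfb φ. split.
    + intros Hns.
      destruct (backward_struct f g h P φ Hf Hg Hh Hg0 HP Hns)
        as (C & Heq & NZ & HCt & HCx & HCxx & PDE).
      pose proof (solve_ii f g C b HCt HCx HCxx PDE Hfb w1 w2 Hg12) as HC.
      exists (DX C 0 0), (C 0 0). split.
      * intros Hc. injection Hc as E1 E2. destruct NZ as (t & x & Hn). apply Hn. rewrite HC, E1, E2. ring.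
      * intros t x w. rewrite Heq, HC. reflexivity.
    + intros (c3 & c4 & Hc & Hφ).
      rewrite (phi_ext φ (Kf 0 0 0 c3 (c3 * b) c4) (fun w => exp (- P w))).
      2:{ intros t x w. rewrite Hφ. unfold Kf. ring. }
      apply forward_nsa; auto.
      * intros t x w. rewrite Hfb. ring.
      * apply NNPP. intros Hn.
        assert (K0 : Kf 0 0 0 c3 (c3 * b) c4 0 0 = 0) by (apply NNPP; intros H; apply Hn; exists 0, 0; auto).
        assert (K1 : Kf 0 0 0 c3 (c3 * b) c4 0 1 = 0) by (apply NNPP; intros H; apply Hn; exists 0, 1; auto).
        unfold Kf in K0, K1. ring_simplify in K0. ring_simplify in K1.
        apply Hc. f_equal; lra.
  - intros NA φ. split.
    + intros Hns.
      destruct (backward_struct f g h P φ Hf Hg Hh Hg0 HP Hns)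
        as (C & Heq & NZ & HCt & HCx & HCxx & PDE).
      pose proof (solve_iii f g C HCt HCx PDE NA) as HC.
      exists (C 0 0). split.
      * intros Hc. destruct NZ as (t & x & Hn). apply Hn. rewrite HC. auto.
      * intros t x w. rewrite Heq, HC. reflexivity.
    + intros (c5 & Hc & Hφ).
      rewrite (phi_ext φ (Kf 0 0 0 0 0 c5) (fun w => exp (- P w))).
      2:{ intros t x w. rewrite Hφ. unfold Kf. ring. }
      apply forward_nsa; auto.
      * intros t x w. ring.
      * exists 0, 0. unfold Kf. intros H. apply Hc. ring_simplify in H. lra.
Qed.
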